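(* Let $C_{\max}(x)\in\arg\max_{C\in\mathcal I}p_C(x)$ (ties broken in favor of the larger weight $w(C)$), and set $D_G(x)=\mathbb 1\{T(x)\ge 1-\alpha\}$ and $C_G(x)=C_{\max}(x)$. Then $(D_G,C_G)$ is a feasible policy (i.e. $mFCR(D_G,C_G)\le\alpha$) that minimizes $G(D,C)$. Moreover, if $\mathbb P(T(X)>1-\alpha)=0$, then $(D_G,C_G)$ is an optimal solution of the problem of maximizing $\Pi(D,C)$ over all $D:\mathcal X\to\{0,1\}$, $C:\mathcal X\to\mathcal I$ subject to $mFCR(D,C)\le\alpha$.
   Context: Let $(X,Y)\sim P_{XY}$ on $\mathcal X\times\mathcal Y$, $\alpha\in(0,1)$, $\mathcal I$ a finite collection of subsets of $\mathcal Y$, $w:\mathcal I\to(0,B)$ a bounded positive weight. For $C\in\mathcal I$ let $p_C(x)=\mathbb P(Y\in C\mid X=x)$ and $T(x)=\max_{C\in\mathcal I}p_C(x)$. For $D:\mathcal X\to\{0,1\}$, $C:\mathcal X\to\mathcal I$: $\Pi(D,C)=\mathbb E[w(C(X))p_{C(X)}(X)D(X)]$, $G(D,C)=\mathbb E[(1-p_{C(X)}(X)-\alpha)D(X)]$, and $mFCR(D,C)=\frac{\mathbb E[\mathbb 1\{Y\notin C(X)\}D(X)]}{\mathbb E[D(X)]}$ with the convention that it is $0$ if $\mathbb E[D(X)]=0$. *)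

(* Defs.v *)
From HB Require Import structures.
From mathcomp Require Import all_boot all_order all_algebra.
From mathcomp Require Import all_classical all_reals all_analysis.
Set Implicit Arguments. Unset Strict Implicit. Unset Printing Implicit Defensive.
Import Order.TTheory GRing.Theory Num.Theory.
Local Open Scope classical_set_scope.
Local Open Scope ring_scope.

Section Defs.
Context {d1 d2 d3 : measure_display} {Om : measurableType d1}
  {Xs : measurableType d2} {Ys : measurableType d3} {R : realType}.

Definition expect (P : probability Om R) (f : Om -> R) : R :=
  fine (\int[P]_w (f w)%:E)%E.

(* q is a version of x |-> P(Y in C | X = x), with values in [0,1]:
   measurable, and P(X in A, Y in C) = E[q(X) ; X in A] for all measurable A *)
Definition is_cond_prob (P : probability Om R) (X : Om -> Xs) (Y : Om -> Ys)
  (C : set Ys) (q : Xs -> R) : Prop :=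
  [/\ measurable_fun setT q, (forall x, 0 <= q x <= 1) &
      forall A : set Xs, measurable A ->
        P (X @^-1` A `&` Y @^-1` C) = (\int[P]_(w in X @^-1` A) (q (X w))%:E)%E].

Definition Tmax {I : finType} (p : I -> Xs -> R) (x : Xs) : R :=
  \big[Num.max/0]_(i : I) p i x.

Definition policy {I : finType} (D : Xs -> bool) (C : Xs -> I) : Prop :=
  measurable (D @^-1` [set true]) /\ forall i, measurable (C @^-1` [set i]).

Definition Pi (P : probability Om R) (X : Om -> Xs) {I : finType}
  (w : I -> R) (p : I -> Xs -> R) (D : Xs -> bool) (C : Xs -> I) : R :=
  expect P (fun om => w (C (X om)) * p (C (X om)) (X om) * (D (X om))%:R).

Definition Gobj (P : probability Om R) (X : Om -> Xs) {I : finType}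
  (alpha : R) (p : I -> Xs -> R) (D : Xs -> bool) (C : Xs -> I) : R :=
  expect P (fun om => (1 - p (C (X om)) (X om) - alpha) * (D (X om))%:R).

Definition mFCR (P : probability Om R) (X : Om -> Xs) (Y : Om -> Ys) {I : finType}
  (S : I -> set Ys) (D : Xs -> bool) (C : Xs -> I) : R :=
  let den := expect P (fun om => (D (X om))%:R) in
  if den == 0 then 0
  else expect P (fun om => \1_(~` S (C (X om))) (Y om) * (D (X om))%:R) / den.

End Defs.

(* Main.v *)
Require Import Defs.
From HB Require Import structures.
From mathcomp Require Import all_boot all_order all_algebra.
From mathcomp Require Import all_classical all_reals all_analysis.
From mathcomp Require Import measurable_realfun lra.
Import Order.TTheory GRing.Theory Num.Theory.
Local Open Scope classical_set_scope.
Local Open Scope ring_scope.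

Section Helpers.
Context d (T : measurableType d) (R : realType) (P : probability T R).

Lemma bint (f : T -> R) (M : R) : measurable_fun setT f ->
  (forall x, `|f x| <= M) -> P.-integrable setT (EFin \o f).
Proof.
move=> mf fM; apply: measurable_bounded_integrable => //.
- by apply: (le_lt_trans (probability_le1 P measurableT)); exact: ltry.
- exists M; split; first by rewrite num_real.
  by move=> y My x _; apply: le_trans (fM x) _; exact: ltW.
Qed.

Lemma int_meas (f : T -> R) : P.-integrable setT (EFin \o f) -> measurable_fun setT f.
Proof. by case/integrableP => /measurable_EFinP. Qed.

Lemma ae_le_Rint (f g : T -> R) : P.-integrable setT (EFin \o f) ->
  P.-integrable setT (EFin \o g) -> {ae P, forall x, f x <= g x} ->
  expect P f <= expect P g.
Proof.
move=> If Ig H; rewrite -subr_ge0.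
have -> : expect P g - expect P f = Rintegral P setT (fun x => g x - f x).
  by rewrite RintegralB.
have mgf : measurable_fun setT (fun x => g x - f x).
  by apply: measurable_funB; exact: int_meas.
have -> : Rintegral P setT (fun x => g x - f x) =
          Rintegral P setT (fun x => Num.max (g x - f x) 0).
  rewrite /Rintegral; congr fine; apply: ae_eq_integral => //.
  - exact/measurable_EFinP.
  - apply/measurable_EFinP; apply: measurable_maxr => //; exact: measurable_cst.
  - apply: filterS H => x fg _; congr EFin; rewrite max_l // subr_ge0 //.
by apply: Rintegral_ge0 => x _; rewrite le_max lexx orbT.
Qed.

Lemma ae_zero (f : T -> R) : P.-integrable setT (EFin \o f) ->
  {ae P, forall x, 0 <= f x} -> expect P f <= 0 -> {ae P, forall x, f x <= 0}.
Proof.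
move=> If H le0.
have mf := @int_meas f If.
pose f' := fun x => Num.max (f x) 0.
have mf' : measurable_fun setT f'.
  by apply: measurable_maxr => //; exact: measurable_cst.
have e : (\int[P]_x (f' x)%:E = \int[P]_x (f x)%:E)%E.
  apply: ae_eq_integral => //; try exact/measurable_EFinP.
  apply: filterS H => x fx _; congr EFin; rewrite /f' max_l //.
have fin : (\int[P]_x (f x)%:E)%E \is a fin_num by exact: integrable_fin_num.
have : (\int[P]_x `|(f' x)%:E| = 0)%E.
  rewrite (eq_integral (fun x => (f' x)%:E)); last first.
    by move=> x _; rewrite gee0_abs // lee_fin /f' le_max lexx orbT.
  apply/le_anti/andP; split.
    by rewrite e -(fineK fin) lee_fin.
  by apply: integral_ge0 => x _; rewrite lee_fin /f' le_max lexx orbT.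
have mEf' : measurable_fun setT (EFin \o f') by exact/measurable_EFinP.
move/(ae_eq_integral_abs P measurableT mEf') => h.
apply: filterS h => x /(_ I) /= [] h.
have : f x <= f' x by rewrite /f' le_max lexx.
by rewrite h.
Qed.

Lemma expect_ge0 (f : T -> R) : (forall x, 0 <= f x) -> 0 <= expect P f.
Proof. by move=> h; apply: Rintegral_ge0 => x _; exact: h. Qed.

Lemma le_exp (f g : T -> R) : P.-integrable setT (EFin \o f) ->
  P.-integrable setT (EFin \o g) -> (forall x, f x <= g x) -> expect P f <= expect P g.
Proof. by move=> If Ig h; apply: le_Rintegral => // x _; exact: h. Qed.

Lemma expectZ (f : T -> R) r : P.-integrable setT (EFin \o f) ->
  expect P (fun x => r * f x) = r * expect P f.
Proof. by move=> If; exact: (RintegralZl r measurableT If). Qed.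

Lemma expectB (f g : T -> R) : P.-integrable setT (EFin \o f) ->
  P.-integrable setT (EFin \o g) ->
  expect P (fun x => f x - g x) = expect P f - expect P g.
Proof. by move=> If Ig; exact: (RintegralB measurableT If Ig). Qed.

End Helpers.
Section Main.
Context {d1 d2 d3 : measure_display} {Om : measurableType d1}
  {Xs : measurableType d2} {Ys : measurableType d3} {R : realType}.
Variables (P : probability Om R) (X : Om -> Xs) (Y : Om -> Ys)
  (I : finType) (S : I -> set Ys) (p : I -> Xs -> R).
Hypotheses (mX : measurable_fun setT X) (mY : measurable_fun setT Y)
  (mS : forall i, measurable (S i)) (hp : forall i, is_cond_prob P X Y (S i) (p i)).

Lemma sum_sel (c : I) (F : I -> R) : \sum_i (c == i)%:R * F i = F c.
Proof.
rewrite (bigD1 c) //= eqxx mul1r big1 ?addr0 // => i /negbTE.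
by rewrite eq_sym => ->; rewrite mul0r.
Qed.

Lemma meas_sel (C : Xs -> I) (f : I -> Xs -> R) :
  (forall i, measurable (C @^-1` [set i])) -> (forall i, measurable_fun setT (f i)) ->
  measurable_fun setT (fun x => f (C x) x).
Proof.
move=> mC mf.
have -> : (fun x => f (C x) x) = (fun x => \sum_i \1_(C @^-1` [set i]) x * f i x).
  apply/funext => x; rewrite -(sum_sel (C x) (fun i => f i x)); apply: eq_bigr => i _.
  rewrite indicE; congr (_ * _); congr (_%:R).
  by have [<-|ne] := eqVneq (C x) i; [rewrite mem_set|rewrite memNset //= => e; move: ne; rewrite e eqxx].
apply: measurable_sum => i; apply: measurable_funM => //; exact: measurable_indic.
Qed.

Lemma meas_b (D : Xs -> bool) : measurable (D @^-1` [set true]) ->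
  measurable_fun setT (fun x => (D x)%:R : R).
Proof.
move=> mD; have -> : (fun x => (D x)%:R : R) = \1_(D @^-1` [set true]).
  apply/funext => x; rewrite indicE; congr (_%:R).
  by case: (boolP (D x)) => h; [rewrite mem_set|rewrite memNset //= => e; move: h; rewrite e].
exact: measurable_indic.
Qed.

Lemma mpreX (A : set Xs) : measurable A -> measurable (X @^-1` A).
Proof. by move=> mA; rewrite -[X @^-1` A]setTI; exact: mX. Qed.

Lemma mpreY (A : set Ys) : measurable A -> measurable (Y @^-1` A).
Proof. by move=> mA; rewrite -[Y @^-1` A]setTI; exact: mY. Qed.

Lemma num_eq (D : Xs -> bool) (C : Xs -> I) : policy D C ->
  expect P (fun om => \1_(~` S (C (X om))) (Y om) * (D (X om))%:R) =
  expect P (fun om => (1 - p (C (X om)) (X om)) * (D (X om))%:R).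
Proof.
move=> [mD mC].
pose A' i := D @^-1` [set true] `&` C @^-1` [set i].
have mA' i : measurable (A' i) by apply: measurableI.
pose A i := X @^-1` A' i.
pose Bs i := Y @^-1` S i.
have mA i : measurable (A i) by exact: mpreX.
have mB i : measurable (Bs i) by exact: mpreY.
have indA i om : \1_(A i) om = (D (X om))%:R * (C (X om) == i)%:R :> R.
  rewrite indicE; case: (boolP (D (X om))) => hD; case: (boolP (C (X om) == i)) => hC.
  - by rewrite mulr1 mem_set //; split => //=; exact/eqP.
  - by rewrite memNset ?mulr0 //= => -[_ /= e]; move: hC; rewrite e eqxx.
  - by rewrite memNset ?mul0r //= => -[/= e]; move: hD; rewrite e.
  - by rewrite memNset ?mul0r //= => -[/= e]; move: hD; rewrite e.
have indB i om : \1_(Bs i) om = \1_(S i) (Y om) :> R by rewrite !indicE.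
have e1 om : \1_(~` S (C (X om))) (Y om) * (D (X om))%:R =
    \sum_i (\1_(A i) om - \1_(A i `&` Bs i) om) :> R.
  under eq_bigr do rewrite indicI /= indB indA -{1}[(D _)%:R * _]mulr1 -mulrBr -mulrA.
  rewrite -mulr_sumr sum_sel mulrC indicC /= indicE; congr (_ * _).
  by case: (Y om \in S (C (X om))); rewrite /= ?subrr ?subr0.
have e2 om : (1 - p (C (X om)) (X om)) * (D (X om))%:R =
    \sum_i (\1_(A i) om * (1 - p i (X om))) :> R.
  under eq_bigr do rewrite indA -mulrA.
  by rewrite -mulr_sumr sum_sel mulrC.
have h01 i om : 0 <= (\1_(A i) om : R) <= 1 .
  by rewrite indicE; case: (_ \in _); rewrite /= lexx ler01.
have [p01 mp] : (forall i x, 0 <= p i x <= 1) /\ (forall i, measurable_fun setT (p i)).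
  by split => i; have [] := hp i.
have intL i : P.-integrable setT (EFin \o (fun om => \1_(A i) om - \1_(A i `&` Bs i) om)).
  apply: (@bint _ _ _ P _ 1).
    by apply: measurable_funB; apply: measurable_indic => //; exact: measurableI.
  move=> om; rewrite !indicE; do 2 case: (_ \in _);
    by rewrite /= ?subrr ?normr0 ?subr0 ?normr1 ?sub0r ?normrN ?normr1 ?ler01.
have intR i : P.-integrable setT (EFin \o (fun om => \1_(A i) om * (1 - p i (X om)))).
  apply: (@bint _ _ _ P _ 1).
    apply: measurable_funM; first exact: measurable_indic.
    apply: measurable_funB; first exact: measurable_cst.
    exact: measurableT_comp.
  move=> om; rewrite normrM; have /andP[a0 a1] := h01 i om.
  have /andP[q0 q1] := p01 i (X om).
  have /andP[b0 b1] : 0 <= 1 - p i (X om) <= 1 by rewrite subr_ge0 q1 /= lerBlDr lerDl.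
  by rewrite !ger0_norm //; exact: mulr_ile1.
rewrite /expect; congr fine.
under eq_integral do rewrite e1 -sumEFin.
under [in RHS]eq_integral do rewrite e2 -sumEFin.
rewrite integral_sum // [in RHS]integral_sum //.
apply: eq_bigr => i _.
under eq_integral do rewrite EFinB.
under [in RHS]eq_integral do rewrite mulrBr mulr1 EFinB.
rewrite integralB_EFin //; last 2 first.
- exact: integrable_indic.
- by apply: integrable_indic; exact: measurableI.
rewrite integralB_EFin //; last 2 first.
- exact: integrable_indic.
- apply: (@bint _ _ _ P _ 1).
    apply: measurable_funM; first exact: measurable_indic.
    exact: measurableT_comp.
  move=> om; rewrite normrM; have /andP[a0 a1] := h01 i om.
  have /andP[q0 q1] := p01 i (X om).
  by rewrite !ger0_norm //; exact: mulr_ile1.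
rewrite !integral_indic //; last exact: measurableI.
rewrite !setIT; congr (_ - _)%E.
have [_ _ hc] := hp i.
transitivity (\int[P]_(w in X @^-1` A' i) (p i (X w))%:E)%E; first exact: hc.
rewrite [LHS]integral_mkcond; apply: eq_integral => x _.
by rewrite patchE indicE; case: (x \in _); rewrite ?mul1r ?mul0r.
Qed.
Lemma int_XC (D : Xs -> bool) (C : Xs -> I) (f : I -> Xs -> R) (M : R) :
  policy D C -> (forall i, measurable_fun setT (f i)) -> 0 <= M ->
  (forall i x, `|f i x| <= M) ->
  P.-integrable setT (EFin \o (fun om => f (C (X om)) (X om) * (D (X om))%:R)).
Proof.
move=> [mD mC] mf M0 fM; apply: (@bint _ _ _ P _ M).
  have h1 := measurableT_comp (@meas_sel C f mC mf) mX.
  have h2 := measurableT_comp (@meas_b _ mD) mX.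
  exact: (measurable_funM h1 h2).
by move=> om; case: (D (X om)); rewrite ?mulr1 ?mulr0 ?normr0.
Qed.

Lemma int_b (D : Xs -> bool) : measurable (D @^-1` [set true]) ->
  P.-integrable setT (EFin \o (fun om => (D (X om))%:R : R)).
Proof.
move=> mD; apply: (@bint _ _ _ P _ 1); first exact: measurableT_comp (@meas_b _ mD) mX.
by move=> om; case: (D (X om)); rewrite ?normr1 ?normr0.
Qed.

End Main.
Theorem proposition11 (d1 d2 d3 : measure_display) (Om : measurableType d1)
  (Xs : measurableType d2) (Ys : measurableType d3) (R : realType)
  (P : probability Om R) (X : Om -> Xs) (Y : Om -> Ys)
  (I : finType) (S : I -> set Ys) (w : I -> R) (B alpha : R)
  (p : I -> Xs -> R) (Cmax : Xs -> I) :
  measurable_fun setT X -> measurable_fun setT Y ->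
  (forall i, measurable (S i)) -> injective S ->
  0 < alpha < 1 -> (forall i, 0 < w i < B) ->
  (forall i, is_cond_prob P X Y (S i) (p i)) ->
  (* Cmax(x) is an argmax of p_C(x), ties broken in favour of larger weight *)
  (forall x i, p i x <= p (Cmax x) x) ->
  (forall x i, p i x = p (Cmax x) x -> w i <= w (Cmax x)) ->
  (forall i, measurable (Cmax @^-1` [set i])) ->
  let DG := fun x => (1 - alpha <= Tmax p x) in
  [/\ mFCR P X Y S DG Cmax <= alpha,
      (forall D C, policy D C -> Gobj P X alpha p DG Cmax <= Gobj P X alpha p D C) &
      (P (X @^-1` [set x | 1 - alpha < Tmax p x]) = 0%E ->
       forall D C, policy D C -> mFCR P X Y S D C <= alpha ->
         Pi P X w p D C <= Pi P X w p DG Cmax)].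
Proof.
move=> mX mY mS injS /andP[a0 a1] hw hp hmax htie mCmax DG.
have [p01 mp] : (forall i x, 0 <= p i x <= 1) /\ (forall i, measurable_fun setT (p i)).
  by split => i; have [] := hp i.
have Teq x : Tmax p x = p (Cmax x) x.
  rewrite /Tmax; apply/le_anti/andP; split.
    elim/big_ind: _ => //.
    - by have /andP[] := p01 (Cmax x) x.
    - by move=> a b ha hb; rewrite ge_max ha hb.
  by rewrite (bigD1 (Cmax x)) //= le_max lexx.
pose pC x := p (Cmax x) x.
have mpC : measurable_fun setT pC := @meas_sel _ _ _ I Cmax p mCmax mp.
have mDG : measurable (DG @^-1` [set true]).
  have -> : DG @^-1` [set true] = setT `&` pC @^-1` `[1 - alpha, +oo[.
    apply/seteqP; split => x /=; rewrite /DG in_itv /= andbT Teq //.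
    by move=> [_ ->].
  exact: mpC (measurable_itv _).
have polG : policy DG Cmax by split.
have IXC := int_XC P X I mX.
have B0 : 0 <= `|B| by [].
have intPi D C : policy D C -> P.-integrable setT
    (EFin \o (fun om => w (C (X om)) * p (C (X om)) (X om) * (D (X om))%:R)).
  move=> pol; apply: (IXC D C (fun i x => w i * p i x) `|B| pol) => //.
    by move=> i; apply: measurable_funM => //; exact: measurable_cst.
  move=> i x; have /andP[w0 wB] := hw i; have /andP[q0 q1] := p01 i x.
  rewrite normrM (ger0_norm (ltW w0)) (ger0_norm q0) ger0_norm; last lra.
  nra.
have intG D C : policy D C -> P.-integrable setT
    (EFin \o (fun om => (1 - p (C (X om)) (X om) - alpha) * (D (X om))%:R)).
  move=> pol; apply: (IXC D C (fun i x => 1 - p i x - alpha) 1 pol) => //.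
    move=> i; apply: measurable_funB; last exact: measurable_cst.
    by apply: measurable_funB => //; exact: measurable_cst.
  move=> i x; have /andP[q0 q1] := p01 i x.
  by rewrite ler_norml; apply/andP; split; lra.
have intN D C : policy D C -> P.-integrable setT
    (EFin \o (fun om => (1 - p (C (X om)) (X om)) * (D (X om))%:R)).
  move=> pol; apply: (IXC D C (fun i x => 1 - p i x) 1 pol) => //.
    by move=> i; apply: measurable_funB => //; exact: measurable_cst.
  move=> i x; have /andP[q0 q1] := p01 i x.
  by rewrite ler_norml; apply/andP; split; lra.
have intA D (C : Xs -> I) : policy D C -> P.-integrable setT
    (EFin \o (fun om => alpha * (D (X om))%:R)).
  move=> pol; apply: (IXC D C (fun i x => alpha) 1 pol) => //.
  by move=> i x; rewrite ger0_norm ?(ltW a0) ?(ltW a1).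
have num := num_eq P X Y I S p mX mY mS hp.
split.
- rewrite /mFCR /=; case: ifPn => [_|hden]; first exact: ltW.
  rewrite (num DG Cmax polG).
  have den0 : 0 < expect P (fun om => (DG (X om))%:R).
    by rewrite lt_def hden expect_ge0 // => om; exact: ler0n.
  rewrite ler_pdivrMr //.
  rewrite -expectZ; last exact: int_b.
  apply: le_exp; [exact: intN|exact: intA|] => om.
  rewrite /DG Teq; have := hmax (X om) (Cmax (X om)).
  have [h|h] := leP (1 - alpha) (p (Cmax (X om)) (X om)); rewrite /= ?mulr1 ?mulr0 //.
  by move=> _; lra.
- move=> D C polDC; apply: le_exp; [exact: intG|exact: intG|] => om.
  rewrite /DG Teq; have := hmax (X om) (C (X om)).
  have /andP[q0 q1] := p01 (C (X om)) (X om).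
  have [h|h] := leP (1 - alpha) (p (Cmax (X om)) (X om));
    case: (D (X om)) => /=; rewrite ?mulr1 ?mulr0 => hm; lra.
move=> N0 D C polDC feas.
pose h om := (1 - p (C (X om)) (X om) - alpha) * (D (X om))%:R.
have Eh : expect P h <= 0.
  move: feas; rewrite /mFCR /= (num D C polDC).
  have dge0 : 0 <= expect P (fun om => (D (X om))%:R).
    by rewrite expect_ge0 // => om; exact: ler0n.
  case: ifPn => [/eqP den0 _|hden].
    rewrite -den0; apply: le_exp; [exact: intG|by apply: int_b; case: polDC|] => om.
    have /andP[q0 q1] := p01 (C (X om)) (X om).
    by rewrite /h; case: (D (X om)); rewrite /= ?mulr1 ?mulr0 //; lra.
  have den0 : 0 < expect P (fun om => (D (X om))%:R) by rewrite lt_def hden dge0.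
  rewrite ler_pdivrMr // -expectZ; last by apply: int_b; case: polDC.
  have -> : expect P h = expect P (fun om => (1 - p (C (X om)) (X om)) * (D (X om))%:R)
      - expect P (fun om => alpha * (D (X om))%:R).
    rewrite -expectB; [|exact: intN|exact: (intA D C polDC)].
    by apply: congr1; apply: boolp.funext => om; rewrite /h mulrBl.
  by rewrite subr_le0.
have mT : measurable [set x | 1 - alpha < Tmax p x].
  have -> : [set x | 1 - alpha < Tmax p x] = setT `&` pC @^-1` `]1 - alpha, +oo[.
    apply/seteqP; split => x /=; rewrite in_itv /= andbT Teq //.
    by move=> [_ ->].
  exact: mpC (measurable_itv _).
have aeN : {ae P, forall om, p (Cmax (X om)) (X om) <= 1 - alpha}.
  exists (X @^-1` [set x | 1 - alpha < Tmax p x]); split => //.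
    exact: mpreX.
  by move=> om /= /negP; rewrite -ltNge Teq.
have hge : {ae P, forall om, 0 <= h om}.
  apply: filterS aeN => om hle; rewrite /h.
  have := hmax (X om) (C (X om)).
  by case: (D (X om)); rewrite /= ?mulr1 ?mulr0 //; lra.
have hle := @ae_zero _ _ _ P h (intG D C polDC) hge Eh.
apply: ae_le_Rint; [exact: intPi|exact: intPi|].
apply: filterS2 aeN hle => om h1; rewrite /h /DG Teq.
have := hmax (X om) (C (X om)).
have /andP[q0 q1] := p01 (C (X om)) (X om).
have /andP[w0 wB] := hw (C (X om)).
have /andP[w0' wB'] := hw (Cmax (X om)).
case: (D (X om)); rewrite /= ?mulr1 ?mulr0 => hm h2.
  have e : p (C (X om)) (X om) = p (Cmax (X om)) (X om).
    by apply/eqP; rewrite eq_le; apply/andP; split; lra.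
  have -> : 1 - alpha <= p (Cmax (X om)) (X om) by lra.
  rewrite /= mulr1 e; apply: ler_wpM2r; first lra.
  exact: htie.
have [_|_] := leP (1 - alpha) (p (Cmax (X om)) (X om)); rewrite /= ?mulr1 ?mulr0 //.
by apply: mulr_ge0; lra.
Qed.
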